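(* There is a function $f(n)=2^{p(n)}$, with $p$ a fixed polynomial, such that every satisfiable $\mathrm{GF}^2{+}\mathrm{EG}$ sentence $\varphi$ that does not use the equality symbol has a finite model of size at most $f(|\varphi|)$.
   Context: Formulas use only variables $x,y$. The two-variable guarded fragment $\mathrm{GF}^2$ is the least set of formulas containing the atomic formulas, closed under Boolean connectives, and closed under $\forall u(p\rightarrow\phi)$ and $\exists u(p\wedge\phi)$ where $p$ (the guard) is an atom containing all free variables of $\phi$ and $u\in\{x,y\}$ is free in $p$. $\mathrm{GF}^2{+}\mathrm{EG}$ (equivalence guards) is $\mathrm{GF}^2$ over a signature with a distinguished set of binary ''special'' symbols which may occur only in guards and which must be interpreted as equivalence relations; any number of special symbols is allowed. Satisfiable means having a (possibly infinite) model with the special symbols interpreted as equivalences. $|\varphi|$ denotes the length of $\varphi$. *)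

(* Defs.v *)
From Stdlib Require Import List.
From mathcomp Require Import all_boot all_algebra.
Set Implicit Arguments. Unset Strict Implicit. Unset Printing Implicit Defensive.

Inductive var := VX | VY.

Definition var_eqb (u v : var) : bool :=
  match u, v with VX, VX | VY, VY => true | _, _ => false end.

(* Ordinary atoms: R(v1,...,vk) for a relation symbol named by a nat
   (its arity is the length of the argument list), or an equality u = v.
   Special (equivalence) symbols are NOT ordinary atoms: they can only occur
   in guards. *)
Inductive gatom :=
  | ARel of nat & seq var
  | AEq of var & var.

Inductive gguard :=
  | GAtom of gatom
  | GSpec of nat & var & var.

Inductive gform :=
  | FAtom of gatom
  | FNeg of gform
  | FAnd of gform & gform
  | FOr of gform & gform
  | FAll of var & gguard & gform   (* forall u (g -> phi) *)
  | FEx of var & gguard & gform.   (* exists u (g /\ phi) *)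

Definition atom_has (v : var) (a : gatom) : Prop :=
  match a with
  | ARel _ args => In v args
  | AEq u w => v = u \/ v = w
  end.

Definition guard_has (v : var) (g : gguard) : Prop :=
  match g with
  | GAtom a => atom_has v a
  | GSpec _ u w => v = u \/ v = w
  end.

Fixpoint fv (f : gform) (v : var) : Prop :=
  match f with
  | FAtom a => atom_has v a
  | FNeg f1 => fv f1 v
  | FAnd f1 f2 | FOr f1 f2 => fv f1 v \/ fv f2 v
  | FAll u g f1 | FEx u g f1 => v <> u /\ (guard_has v g \/ fv f1 v)
  end.

Fixpoint guarded (f : gform) : Prop :=
  match f with
  | FAtom _ => True
  | FNeg f1 => guarded f1
  | FAnd f1 f2 | FOr f1 f2 => guarded f1 /\ guarded f2
  | FAll u g f1 | FEx u g f1 =>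
      guarded f1 /\ guard_has u g /\ (forall v, fv f1 v -> guard_has v g)
  end.

Definition gsentence (f : gform) : Prop := guarded f /\ forall v, ~ fv f v.

Definition atom_eqfree (a : gatom) : bool :=
  match a with ARel _ _ => true | AEq _ _ => false end.

Definition guard_eqfree (g : gguard) : bool :=
  match g with GAtom a => atom_eqfree a | GSpec _ _ _ => true end.

Fixpoint eqfree (f : gform) : bool :=
  match f with
  | FAtom a => atom_eqfree a
  | FNeg f1 => eqfree f1
  | FAnd f1 f2 | FOr f1 f2 => eqfree f1 && eqfree f2
  | FAll _ g f1 | FEx _ g f1 => guard_eqfree g && eqfree f1
  end.

Definition atom_len (a : gatom) : nat :=
  match a with ARel _ args => (size args).+1 | AEq _ _ => 3 end.

Definition guard_len (g : gguard) : nat :=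
  match g with GAtom a => atom_len a | GSpec _ _ _ => 3 end.

Fixpoint flen (f : gform) : nat :=
  match f with
  | FAtom a => atom_len a
  | FNeg f1 => (flen f1).+1
  | FAnd f1 f2 | FOr f1 f2 => (flen f1 + flen f2).+1
  | FAll _ g f1 | FEx _ g f1 => (guard_len g + flen f1).+2
  end.

Record gstructure (D : Type) := Structure {
  srel : nat -> seq D -> Prop;
  sspec : nat -> D -> D -> Prop;
  sspec_refl : forall e x, sspec e x x;
  sspec_sym : forall e x y, sspec e x y -> sspec e y x;
  sspec_trans : forall e x y z, sspec e x y -> sspec e y z -> sspec e x z
}.

Definition upd (D : Type) (a : var -> D) (u : var) (d : D) : var -> D :=
  fun v => if var_eqb v u then d else a v.

Definition eval_atom (D : Type) (M : gstructure D) (a : var -> D) (t : gatom) : Prop :=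
  match t with
  | ARel s args => srel M s (map a args)
  | AEq u v => a u = a v
  end.

Definition eval_guard (D : Type) (M : gstructure D) (a : var -> D) (g : gguard) : Prop :=
  match g with
  | GAtom t => eval_atom M a t
  | GSpec e u v => sspec M e (a u) (a v)
  end.

Fixpoint gholds (D : Type) (M : gstructure D) (a : var -> D) (f : gform) : Prop :=
  match f with
  | FAtom t => eval_atom M a t
  | FNeg f1 => ~ gholds M a f1
  | FAnd f1 f2 => gholds M a f1 /\ gholds M a f2
  | FOr f1 f2 => gholds M a f1 \/ gholds M a f2
  | FAll u g f1 => forall d : D,
      eval_guard M (upd a u d) g -> gholds M (upd a u d) f1
  | FEx u g f1 => exists d : D,
      eval_guard M (upd a u d) g /\ gholds M (upd a u d) f1
  end.

Definition satisfiable (f : gform) : Prop :=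
  exists (D : Type) (M : gstructure D) (a : var -> D), gholds M a f.

Definition has_model_of_size (f : gform) (n : nat) : Prop :=
  0 < n /\ exists (M : gstructure 'I_n) (a : var -> 'I_n), gholds M a f.

(* Main.v *)
Require Import Defs.
From Stdlib Require Import List Classical ClassicalEpsilon FunctionalExtensionality.
From mathcomp Require Import all_boot all_algebra zify.
From Stdlib Require Import Lia.
Set Implicit Arguments. Unset Strict Implicit. Unset Printing Implicit Defensive.

Definition asgxy (D : Type) (p q : D) : var -> D :=
  fun v => match v with VX => p | VY => q end.
Definition asg2 (D : Type) (w : var) (p q : D) : var -> D :=
  match w with VY => asgxy p q | VX => asgxy q p end.

Lemma map_ext_In (A B : Type) (f g : A -> B) (l : seq A) :
  (forall x, In x l -> f x = g x) -> map f l = map g l.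
Proof. elim: l => //= x l IH H; rewrite H ?IH //; auto. Qed.

Lemma gholds_coinc (D : Type) (M : gstructure D) (f : gform) :
  forall a b : var -> D, (forall v, fv f v -> a v = b v) ->
  (gholds M a f <-> gholds M b f).
Proof.
elim: f => [t|f IH|f1 IH1 f2 IH2|f1 IH1 f2 IH2|u g f IH|u g f IH] a b H /=.
- case: t H => [s args|u v] /= H.
  + rewrite (map_ext_In (f:=a) (g:=b)) //; move=> x Hx; apply: H; exact Hx.
  + rewrite (H u (or_introl erefl)) (H v (or_intror erefl)); tauto.
- by rewrite (IH a b H); tauto.
- rewrite (IH1 a b) ?(IH2 a b); [tauto| |]; move=> v Hv; apply: H; simpl; auto.
- rewrite (IH1 a b) ?(IH2 a b); [tauto| |]; move=> v Hv; apply: H; simpl; auto.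
- have E : forall d v, guard_has v g \/ fv f v -> upd a u d v = upd b u d v.
    move=> d v Hv; rewrite /upd; destruct v, u; simpl; try reflexivity;
      apply: H; simpl; (split; [discriminate| exact Hv]).
  have EG : forall d, eval_guard M (upd a u d) g <-> eval_guard M (upd b u d) g.
    move=> d; destruct g as [[s args|x y]|e x y]; simpl.
    * rewrite (map_ext_In (f:=upd a u d) (g:=upd b u d)); first tauto. move=> z Hz; apply: E; left; exact Hz.
    * have E1 := E d x (or_introl (or_introl erefl)).
      have E2 := E d y (or_introl (or_intror erefl)).
      rewrite E1 E2; tauto.
    * have E1 := E d x (or_introl (or_introl erefl)).
      have E2 := E d y (or_introl (or_intror erefl)).
      rewrite E1 E2; tauto.
  split=> Hq d.
  + move/EG=> Hg; apply/(IH (upd a u d)); first by move=> v Hv; apply: E; right.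
    exact: Hq.
  + move/EG=> Hg; apply/(IH (upd a u d) (upd b u d)); first by move=> v Hv; apply: E; right.
    exact: Hq.
- have E : forall d v, guard_has v g \/ fv f v -> upd a u d v = upd b u d v.
    move=> d v Hv; rewrite /upd; destruct v, u; simpl; try reflexivity;
      apply: H; simpl; (split; [discriminate| exact Hv]).
  have EG : forall d, eval_guard M (upd a u d) g <-> eval_guard M (upd b u d) g.
    move=> d; destruct g as [[s args|x y]|e x y]; simpl.
    * rewrite (map_ext_In (f:=upd a u d) (g:=upd b u d)); first tauto. move=> z Hz; apply: E; left; exact Hz.
    * have E1 := E d x (or_introl (or_introl erefl)).
      have E2 := E d y (or_introl (or_intror erefl)).
      rewrite E1 E2; tauto.
    * have E1 := E d x (or_introl (or_introl erefl)).
      have E2 := E d y (or_introl (or_intror erefl)).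
      rewrite E1 E2; tauto.
  split=> -[d [Hg Hf]]; exists d; split.
  + exact/EG.
  + by apply/(IH (upd a u d) (upd b u d)) => // v Hv; apply: E; right.
  + exact/EG.
  + by apply/(IH (upd a u d) (upd b u d)) => // v Hv; apply: E; right.
Qed.

Lemma gholds_ext (D : Type) (M : gstructure D) f (a b : var -> D) :
  (forall v, a v = b v) -> (gholds M a f <-> gholds M b f).
Proof. by move=> H; apply: gholds_coinc => v _; apply: H. Qed.

Section Transport.
Variables (F : finType) (N : gstructure F).

Definition Ntr : gstructure 'I_#|F|.
refine (@Structure _ (fun s L => srel N s (map enum_val L))
   (fun e x y => sspec N e (enum_val x) (enum_val y)) _ _ _).
- by move=> e x; apply: sspec_refl.
- by move=> e x y; apply: sspec_sym.
- by move=> e x y z; apply: sspec_trans.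
Defined.

Lemma Ntr_holds f : forall a, gholds Ntr a f <-> gholds N (fun v => enum_val (a v)) f.
Proof.
elim: f => [t|f IH|f1 IH1 f2 IH2|f1 IH1 f2 IH2|u g f IH|u g f IH] a /=.
- case: t => [s args|u v] /=.
  + by rewrite -map_comp; tauto.
  + split; first by move=> ->.
    by move/enum_val_inj.
- by rewrite IH; tauto.
- by rewrite IH1 IH2; tauto.
- by rewrite IH1 IH2; tauto.
- have EU : forall d, (fun v => enum_val (upd a u d v)) = upd (fun v => enum_val (a v)) u (enum_val d).
    by move=> d; apply: functional_extensionality_dep => v; rewrite /upd; case: (var_eqb v u).
  have EG : forall d, eval_guard Ntr (upd a u d) g <-> eval_guard N (upd (fun v => enum_val (a v)) u (enum_val d)) g.
    move=> d; rewrite -EU; case: g => [[s args|x y]|e x y] /=.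
    * by rewrite -map_comp; tauto.
    * split; first by move=> ->. by move/enum_val_inj.
    * tauto.
  split=> H d.
  + rewrite -(enum_rankK d) => Hg.
    have := H (enum_rank d) (proj2 (EG _) Hg).
    by move/IH; rewrite EU.
  + move/EG => Hg; apply/IH; rewrite EU; exact: H.
- have EU : forall d, (fun v => enum_val (upd a u d v)) = upd (fun v => enum_val (a v)) u (enum_val d).
    by move=> d; apply: functional_extensionality_dep => v; rewrite /upd; case: (var_eqb v u).
  have EG : forall d, eval_guard Ntr (upd a u d) g <-> eval_guard N (upd (fun v => enum_val (a v)) u (enum_val d)) g.
    move=> d; rewrite -EU; case: g => [[s args|x y]|e x y] /=.
    * by rewrite -map_comp; tauto.
    * split; first by move=> ->. by move/enum_val_inj.
    * tauto.
  split=> -[d [Hg Hf]].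
  + exists (enum_val d); split; first exact/EG.
    by rewrite -EU; apply/IH.
  + exists (enum_rank d); split.
    * by apply/EG; rewrite enum_rankK.
    * by apply/IH; rewrite EU enum_rankK.
Qed.

Lemma transport f (a : var -> F) : gholds N a f -> has_model_of_size f #|F|.
Proof.
move=> H; split.
  by apply/card_gt0P; exists (a VX).
exists Ntr, (fun v => enum_rank (a v)).
apply/Ntr_holds; have E : forall v, a v = enum_val (enum_rank (a v)) by move=> v; rewrite enum_rankK.
exact: (proj1 (gholds_ext N f E)).
Qed.
End Transport.

Definition other (w : var) := match w with VX => VY | VY => VX end.
Definition fixc (X : Type) (w : var) (p q : X) := match w with VY => p | VX => q end.
Definition varc (X : Type) (w : var) (p q : X) := match w with VY => q | VX => p end.
Definition ox (X : Type) (w : var) (p v : X) := match w with VY => p | VX => v end.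
Definition oy (X : Type) (w : var) (p v : X) := match w with VY => v | VX => p end.

Lemma updE (X : Type) (p q v : X) w : upd (asgxy p q) w v = asg2 w (fixc w p q) v.
Proof. by apply: functional_extensionality => x; case: w; case: x. Qed.

Lemma asg2E (X : Type) w (p v : X) : asg2 w p v = asgxy (ox w p v) (oy w p v).
Proof. by case: w. Qed.

Lemma asgxyE (X : Type) w (d e : X) : asgxy d e = asg2 w (fixc w d e) (varc w d e).
Proof. by apply: functional_extensionality => x; case: w; case: x. Qed.

Lemma fixc_o (X : Type) w (p v : X) : fixc w (ox w p v) (oy w p v) = p.
Proof. by case: w. Qed.

Fixpoint gsub (g : gguard) : seq gform :=
  match g with GAtom a => [:: FAtom a] | GSpec _ _ _ => [::] end.

Fixpoint sub (f : gform) : seq gform :=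
  match f with
  | FAtom a => [:: FAtom a]
  | FNeg f1 => FNeg f1 :: sub f1
  | FAnd f1 f2 => FAnd f1 f2 :: (sub f1 ++ sub f2)
  | FOr f1 f2 => FOr f1 f2 :: (sub f1 ++ sub f2)
  | FAll w g f1 => FAll w g f1 :: (gsub g ++ sub f1)
  | FEx w g f1 => FEx w g f1 :: (gsub g ++ sub f1)
  end.

Lemma eval_guard_coinc (D : Type) (M : gstructure D) g (a b : var -> D) :
  (forall v, guard_has v g -> a v = b v) -> (eval_guard M a g <-> eval_guard M b g).
Proof.
case: g => [[s args|x y]|e x y] /= H.
- by rewrite (map_ext_In (f:=a) (g:=b)); [tauto| move=> z Hz; apply: H].
- by rewrite (H x (or_introl erefl)) (H y (or_intror erefl)); tauto.
- by rewrite (H x (or_introl erefl)) (H y (or_intror erefl)); tauto.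
Qed.

Lemma sub_head f : In f (sub f).
Proof. by case: f => /=; auto. Qed.

Lemma Qfix (X : Type) (K : gstructure X) Q w (p q : X) :
  (forall x, fv Q x -> x <> w) ->
  (gholds K (asgxy p q) Q <-> gholds K (asgxy (fixc w p q) (fixc w p q)) Q).
Proof.
move=> H; apply: gholds_coinc => x Hx; have := H x Hx; by destruct w, x.
Qed.

Lemma upd_diag (X : Type) (p v : X) w : upd (asgxy p p) w v = asg2 w p v.
Proof. by rewrite updE; case: w. Qed.

Section Link.
Variables (D F : Type) (M : gstructure D) (N : gstructure F).
Variable Sig : seq gform.
Variable src : F -> D.
Variable Lk : F -> F -> option (D * D).

Definition sametype (d d' : D) := forall chi, In chi Sig ->
  (gholds M (asgxy d d) chi <-> gholds M (asgxy d' d') chi).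

Hypothesis H0 : forall u, Lk u u = Some (src u, src u).
Hypothesis H1 : forall u v d e, Lk u v = Some (d, e) ->
  sametype d (src u) /\ sametype e (src v).
Hypothesis H2 : forall u v, Lk v u = omap (fun p => (p.2, p.1)) (Lk u v).
Hypothesis HA : forall s args, In (FAtom (ARel s args)) Sig ->
  forall p q d e, Lk p q = Some (d, e) ->
  (srel N s (map (asgxy p q) args) <-> srel M s (map (asgxy d e) args)).
Hypothesis HAn : forall s args p q, In VX args -> In VY args ->
  srel N s (map (asgxy p q) args) -> exists de, Lk p q = Some de.
Hypothesis HS : forall g p q, sspec N g p q ->
  exists d e, Lk p q = Some (d, e) /\ sspec M g d e.
Hypothesis HW : forall u w G psi (pol : bool),
  In (if pol then FEx w G psi else FAll w G psi) Sig -> guard_has (other w) G ->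
  (exists e', eval_guard M (asg2 w (src u) e') G /\
     (if pol then gholds M (asg2 w (src u) e') psi else ~ gholds M (asg2 w (src u) e') psi)) ->
  exists v d e, Lk u v = Some (d, e) /\ eval_guard M (asg2 w d e) G /\
     (if pol then gholds M (asg2 w d e) psi else ~ gholds M (asg2 w d e) psi) /\
     eval_guard N (asg2 w u v) G.
Hypothesis H5 : forall e', exists v, sametype (src v) e'.

Lemma Lk_o w p v d e : Lk p v = Some (d, e) ->
  Lk (ox w p v) (oy w p v) = Some (ox w d e, oy w d e).
Proof. by case: w => //= H; rewrite H2 H. Qed.

Lemma sametype_fix w pp qq d e : Lk pp qq = Some (d, e) ->
  sametype (fixc w d e) (src (fixc w pp qq)).
Proof. by move/H1 => [? ?]; case: w. Qed.

Lemma guard_link G w pp qq : guard_eqfree G -> In G [::] \/ True ->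
  guard_has w G -> guard_has (other w) G -> incl (gsub G) Sig ->
  eval_guard N (asgxy pp qq) G ->
  exists d e, Lk pp qq = Some (d, e) /\ eval_guard M (asgxy d e) G.
Proof.
move=> Heq _ Hw Ho Hsub.
destruct G as [[s args|x y]|g x y]; simpl in *; try discriminate; move=> HG.
- have [[d e] E] : exists de, Lk pp qq = Some de.
    apply: (HAn (s:=s) (args:=args)) => //; case: w Hw Ho => /=; tauto.
  exists d, e; split => //; apply/(HA _ E) => //; apply: Hsub; left; reflexivity.
- have Hxy : (x = VX /\ y = VY) \/ (x = VY /\ y = VX).
    by clear HG; destruct w, x, y; simpl in *; intuition congruence.
  case: Hxy => [[? ?]|[? ?]]; subst x y; simpl in HG |- *.
  + by have [d [e [E Hs]]] := HS HG; exists d, e.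
  + have [d [e [E Hs]]] := HS (sspec_sym HG); exists d, e; split => //.
    exact: sspec_sym.
Qed.

Lemma guard_diag G v : guard_eqfree G -> incl (gsub G) Sig ->
  (eval_guard N (asgxy v v) G <-> eval_guard M (asgxy (src v) (src v)) G).
Proof.
case: G => [[s args|x y]|g x y] //= _ Hsub.
- by apply: HA; [apply: Hsub; left | apply: H0].
- by destruct x, y; split => _; apply: sspec_refl.
Qed.

Lemma guard_same G d d' : incl (gsub G) Sig -> sametype d d' ->
  (eval_guard M (asgxy d d) G <-> eval_guard M (asgxy d' d') G).
Proof.
case: G => [[s args|x y]|g x y] //= Hsub Hs.
- by have := Hs (FAtom (ARel s args)) (Hsub _ (or_introl erefl)).
- by destruct x, y; simpl; tauto.
- by destruct x, y; split => _; apply: sspec_refl.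
Qed.

Lemma unary_coinc (X : Type) (K : gstructure X) w G psi (p v : X) :
  guard_has w G -> ~ guard_has (other w) G -> (forall x, fv psi x -> guard_has x G) ->
  (eval_guard K (asg2 w p v) G <-> eval_guard K (asgxy v v) G) /\
  (gholds K (asg2 w p v) psi <-> gholds K (asgxy v v) psi).
Proof.
move=> Hw Ho Hf.
have E : forall x, guard_has x G -> asg2 w p v x = asgxy v v x.
  move=> x Hx; case: w Hw Ho {Hf}; case: x Hx => //=.
split; first exact: eval_guard_coinc.
apply: gholds_coinc => x Hx; apply: E; exact: Hf.
Qed.

Lemma N2M w G psi : guard_eqfree G -> guard_has w G -> (forall x, fv psi x -> guard_has x G) ->
  incl (gsub G) Sig ->
  (forall p q d e, Lk p q = Some (d, e) -> (gholds N (asgxy p q) psi <-> gholds M (asgxy d e) psi)) ->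
  forall p0 v, eval_guard N (asg2 w p0 v) G -> exists d0 e0,
    sametype d0 (src p0) /\ eval_guard M (asg2 w d0 e0) G /\
    (gholds N (asg2 w p0 v) psi <-> gholds M (asg2 w d0 e0) psi).
Proof.
move=> HeqG Hgw Hgf HsubG IHp p0 v HG.
case: (classic (guard_has (other w) G)) => Ho.
- rewrite asg2E in HG.
  have [d' [e' [E' HM]]] := guard_link HeqG (or_intror I) Hgw Ho HsubG HG.
  exists (fixc w d' e'), (varc w d' e').
  have := sametype_fix w E'; rewrite fixc_o => Hst.
  split => //; rewrite -asgxyE; split => //.
  rewrite asg2E; exact: IHp E'.
- exists (src p0), (src v).
  split; first by move=> chi _; tauto.
  have [UN1 UN2] := unary_coinc N p0 v Hgw Ho Hgf.
  have [UM1 UM2] := unary_coinc M (src p0) (src v) Hgw Ho Hgf.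
  split.
  + apply/UM1; apply/(guard_diag v HeqG HsubG); exact/UN1.
  + rewrite UN2 UM2; exact: IHp (H0 v).
Qed.

Lemma M2N w G psi (pol : bool) : guard_eqfree G -> guard_has w G -> (forall x, fv psi x -> guard_has x G) ->
  incl (gsub G) Sig -> In psi Sig ->
  (forall p q d e, Lk p q = Some (d, e) -> (gholds N (asgxy p q) psi <-> gholds M (asgxy d e) psi)) ->
  forall p0 e',
    In (if pol then FEx w G psi else FAll w G psi) Sig ->
    eval_guard M (asg2 w (src p0) e') G ->
    (if pol then gholds M (asg2 w (src p0) e') psi else ~ gholds M (asg2 w (src p0) e') psi) ->
    exists v, eval_guard N (asg2 w p0 v) G /\
    (if pol then gholds N (asg2 w p0 v) psi else ~ gholds N (asg2 w p0 v) psi).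
Proof.
move=> HeqG Hgw Hgf HsubG Hpsi IHp p0 e' HQ HG Hp.
case: (classic (guard_has (other w) G)) => Ho.
- have [v [d' [e0 [E' [HG' [Hp' HN]]]]]] := HW HQ Ho (ex_intro _ e' (conj HG Hp)).
  exists v; split => //.
  have E2 := Lk_o w E'; rewrite asg2E in Hp'; rewrite asg2E.
  have := IHp _ _ _ _ E2; case: (pol) Hp Hp' {HQ}; tauto.
- have [v Hv] := H5 e'.
  exists v.
  have [UN1 UN2] := unary_coinc N p0 v Hgw Ho Hgf.
  have [UM1 UM2] := unary_coinc M (src p0) e' Hgw Ho Hgf.
  have Gs := guard_same HsubG Hv.
  have Ps := Hv psi Hpsi.
  have Dg := guard_diag v HeqG HsubG.
  have Ip := IHp _ _ _ _ (H0 v).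
  case: (pol) Hp {HQ}; tauto.
Qed.

Lemma main_link chi : guarded chi -> eqfree chi -> incl (sub chi) Sig ->
  forall p q d e, Lk p q = Some (d, e) ->
  (gholds N (asgxy p q) chi <-> gholds M (asgxy d e) chi).
Proof.
elim: chi => [t|f IH|f1 IH1 f2 IH2|f1 IH1 f2 IH2|w G psi IH|w G psi IH] /= Hg Heq Hsub p q d e E.
- case: t Heq Hsub => [s args|x y] //= _ Hsub.
  by apply: HA => //; apply: Hsub; left.
- have := IH Hg Heq (fun a Ha => Hsub a (or_intror Ha)) p q d e E; tauto.
- move/andP: Heq => [Heq1 Heq2]; case: Hg => Hg1 Hg2.
  have := IH1 Hg1 Heq1 (fun a Ha => Hsub a (or_intror (in_or_app _ _ _ (or_introl Ha)))) p q d e E.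
  have := IH2 Hg2 Heq2 (fun a Ha => Hsub a (or_intror (in_or_app _ _ _ (or_intror Ha)))) p q d e E.
  tauto.
- move/andP: Heq => [Heq1 Heq2]; case: Hg => Hg1 Hg2.
  have := IH1 Hg1 Heq1 (fun a Ha => Hsub a (or_intror (in_or_app _ _ _ (or_introl Ha)))) p q d e E.
  have := IH2 Hg2 Heq2 (fun a Ha => Hsub a (or_intror (in_or_app _ _ _ (or_intror Ha)))) p q d e E.
  tauto.
all: move/andP: Heq => [HeqG Heqp]; case: Hg => [Hgp [Hgw Hgf]].
all: have HsubG : incl (gsub G) Sig by move=> a Ha; apply: Hsub; right; apply: in_or_app; left.
all: have Hsubp : incl (sub psi) Sig by move=> a Ha; apply: Hsub; right; apply: in_or_app; right.
all: have IHp := IH Hgp Heqp Hsubp.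
all: have Hpsi : In psi Sig by apply: Hsubp; apply: sub_head.
-
  have QN : forall p0, gholds N (asgxy p0 p0) (FAll w G psi) <->
                       gholds M (asgxy (src p0) (src p0)) (FAll w G psi).
    move=> p0 /=; split.
    + move=> HN v; rewrite !upd_diag => HG; apply: NNPP => Hp.
      have [v' [HG' Hp']] := M2N (pol:=false) HeqG Hgw Hgf HsubG Hpsi IHp (Hsub _ (or_introl erefl)) HG Hp.
      by apply: Hp'; have := HN v'; rewrite !upd_diag; apply.
    + move=> HM v; rewrite !upd_diag => HG.
      have [d0 [e0 [Hst [HG' Hp]]]] := N2M HeqG Hgw Hgf HsubG IHp HG.
      apply/Hp.
      have : gholds M (asgxy d0 d0) (FAll w G psi).
        by apply/(Hst _ (Hsub _ (or_introl erefl))).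
      by move=> /= /(_ e0); rewrite !upd_diag; apply.
  have Hfv : forall x, fv (FAll w G psi) x -> x <> w by move=> x /= [].
  have A1 := Qfix N p q Hfv.
  have A2 := Qfix M d e Hfv.
  have A3 := QN (fixc w p q).
  have Hst := sametype_fix w E.
  have A4 := Hst _ (Hsub _ (or_introl erefl)).
  simpl in A1, A2, A3, A4; tauto.
-
  have QN : forall p0, gholds N (asgxy p0 p0) (FEx w G psi) <->
                       gholds M (asgxy (src p0) (src p0)) (FEx w G psi).
    move=> p0 /=; split.
    + move=> [v]; rewrite !upd_diag => -[HG Hp].
      have [d0 [e0 [Hst [HG' Hp']]]] := N2M HeqG Hgw Hgf HsubG IHp HG.
      have : gholds M (asgxy d0 d0) (FEx w G psi).
        by exists e0; rewrite !upd_diag; split => //; apply/Hp'.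
      by move/(Hst _ (Hsub _ (or_introl erefl))).
    + move=> [e']; rewrite !upd_diag => -[HG Hp].
      have [v [HG' Hp']] := M2N (pol:=true) HeqG Hgw Hgf HsubG Hpsi IHp (Hsub _ (or_introl erefl)) HG Hp.
      by exists v; rewrite !upd_diag.
  have Hfv : forall x, fv (FEx w G psi) x -> x <> w by move=> x /= [].
  have A1 := Qfix N p q Hfv.
  have A2 := Qfix M d e Hfv.
  have A3 := QN (fixc w p q).
  have Hst := sametype_fix w E.
  have A4 := Hst _ (Hsub _ (or_introl erefl)).
  simpl in A1, A2, A3, A4; tauto.
Qed.
End Link.

Definition pb (P : Prop) : bool := if excluded_middle_informative P then true else false.
Lemma pbP (P : Prop) : pb P = true <-> P.
Proof. by rewrite /pb; case: excluded_middle_informative. Qed.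
Lemma pb_iff (P Q : Prop) : pb P = pb Q -> (P <-> Q).
Proof.
rewrite /pb; case: excluded_middle_informative; case: excluded_middle_informative => //; tauto.
Qed.

Fixpoint gspecs (g : gguard) : seq nat :=
  match g with GSpec e _ _ => [:: e] | _ => [::] end.
Fixpoint specs (f : gform) : seq nat :=
  match f with
  | FAtom _ => [::]
  | FNeg f1 => specs f1
  | FAnd f1 f2 | FOr f1 f2 => specs f1 ++ specs f2
  | FAll _ g f1 | FEx _ g f1 => gspecs g ++ specs f1
  end.

Definition dflt := FAtom (ARel 0 [::]).

Definition guard_of (f : gform) : option gguard :=
  match f with FEx _ G _ | FAll _ G _ => Some G | _ => None end.

Definition wp (D : Type) (M : gstructure D) (Qf : gform) (d e : D) : Prop :=
  match Qf with
  | FEx w G psi => eval_guard M (asg2 w d e) G /\ gholds M (asg2 w d e) psi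
  | FAll w G psi => eval_guard M (asg2 w d e) G /\ ~ gholds M (asg2 w d e) psi
  | _ => False
  end.

Lemma sub_size_pos f : 0 < size (sub f).
Proof. by case: f. Qed.

Lemma In_nth_seq (A : Type) (x0 : A) (s : seq A) x :
  In x s -> exists i, i < size s /\ nth x0 s i = x.
Proof.
elim: s => //= a s IH [->|H]; first by exists 0.
by have [i [Hi Hn]] := IH H; exists i.+1.
Qed.

Lemma modfix (t r m : nat) : 0 < m -> t < m -> ((t + m - r %% m) %% m + r) %% m = t.
Proof.
move=> mpos Ht.
have Hr : r %% m < m := ltn_pmod r mpos.
rewrite modnDml {2}(divn_eq r m).
set qm := r %/ m * m; set s := r %% m.
have -> : t + m - s + (qm + s) = m + qm + t by lia.
by rewrite /qm -mulSn modnMDl modn_small.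
Qed.


Lemma In_app_or' (A : Type) (x : A) l1 l2 : In x (l1 ++ l2) -> In x l1 \/ In x l2.
Proof. elim: l1 => [|a l IH] /=; first by right. move=> [->|/IH [H|H]]; auto. Qed.
Arguments In_app_or' {A x l1 l2} _.

Lemma sub_incl f g : In g (sub f) -> incl (sub g) (sub f).
Proof.
elim: f => [a|f IH|f1 IH1 f2 IH2|f1 IH1 f2 IH2|w G f IH|w G f IH] /=.
- by move=> [<-|[]].
- move=> [<-|H]; first exact: incl_refl.
  by move=> x Hx; right; exact: (IH H x Hx).
- move=> [<-|/In_app_or' [H|H]]; first exact: incl_refl.
  + by move=> x Hx; right; apply: in_or_app; left; exact: (IH1 H x Hx).
  + by move=> x Hx; right; apply: in_or_app; right; exact: (IH2 H x Hx).
- move=> [<-|/In_app_or' [H|H]]; first exact: incl_refl.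
  + by move=> x Hx; right; apply: in_or_app; left; exact: (IH1 H x Hx).
  + by move=> x Hx; right; apply: in_or_app; right; exact: (IH2 H x Hx).
- move=> [<-|/In_app_or' [H|H]]; first exact: incl_refl.
  + case: G H => [a|e x y] /= H; last by case: H.
    by case: H => [<-|[]] z /= [<-|[]]; right; left.
  + by move=> x Hx; right; apply: in_or_app; right; exact: (IH H x Hx).
- move=> [<-|/In_app_or' [H|H]]; first exact: incl_refl.
  + case: G H => [a|e x y] /= H; last by case: H.
    by case: H => [<-|[]] z /= [<-|[]]; right; left.
  + by move=> x Hx; right; apply: in_or_app; right; exact: (IH H x Hx).
Qed.

Lemma sub_guarded f g : guarded f -> In g (sub f) -> guarded g.
Proof.
elim: f => [a|f IH|f1 IH1 f2 IH2|f1 IH1 f2 IH2|w G f IH|w G f IH] /= Hg.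
- by move=> [<-|[]].
- by move=> [<-|H] //; apply: IH.
- by move=> [<-|/In_app_or' [H|H]] //; [apply: IH1 | apply: IH2]; tauto.
- by move=> [<-|/In_app_or' [H|H]] //; [apply: IH1 | apply: IH2]; tauto.
- move=> [<-|/In_app_or' [H|H]] //; last by apply: IH; tauto.
  by case: G H {Hg} => [a|e x y] /= H; [case: H => [<-|[]] | case: H].
- move=> [<-|/In_app_or' [H|H]] //; last by apply: IH; tauto.
  by case: G H {Hg} => [a|e x y] /= H; [case: H => [<-|[]] | case: H].
Qed.

Lemma sub_eqfree f g : eqfree f -> In g (sub f) -> eqfree g.
Proof.
elim: f => [a|f IH|f1 IH1 f2 IH2|f1 IH1 f2 IH2|w G f IH|w G f IH] /= Hg.
- by move=> [<-|[]].
- by move=> [<-|H] //; apply: IH.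
- by move/andP: Hg => [H1 H2] [<-|/In_app_or' [H|H]] /=; [rewrite H1 H2|apply: IH1|apply: IH2].
- by move/andP: Hg => [H1 H2] [<-|/In_app_or' [H|H]] /=; [rewrite H1 H2|apply: IH1|apply: IH2].
- move/andP: Hg => [H1 H2] [<-|/In_app_or' [H|H]] /=; [by rewrite H1 H2| |by apply: IH].
  by case: G H H1 => [a|e x y] /= H; [case: H => [<-|[]] | case: H].
- move/andP: Hg => [H1 H2] [<-|/In_app_or' [H|H]] /=; [by rewrite H1 H2| |by apply: IH].
  by case: G H H1 => [a|e x y] /= H; [case: H => [<-|[]] | case: H].
Qed.

Lemma sub_specs f g : In g (sub f) -> forall n, n \in specs g -> n \in specs f.
Proof.
elim: f => [a|f IH|f1 IH1 f2 IH2|f1 IH1 f2 IH2|w G f IH|w G f IH] /=.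
- by move=> [<-|[]].
- by move=> [<-|H] // n /(IH H).
- move=> [<-|/In_app_or' [H|H]] // n Hn; rewrite mem_cat; [by rewrite (IH1 H n Hn)|by rewrite (IH2 H n Hn) orbT].
- move=> [<-|/In_app_or' [H|H]] // n Hn; rewrite mem_cat; [by rewrite (IH1 H n Hn)|by rewrite (IH2 H n Hn) orbT].
- move=> [<-|/In_app_or' [H|H]] // n Hn; rewrite mem_cat; last by rewrite (IH H n Hn) orbT.
  by case: G H => [a|e x y] /= H; [case: H => [E|[]]; subst g | case: H].
- move=> [<-|/In_app_or' [H|H]] // n Hn; rewrite mem_cat; last by rewrite (IH H n Hn) orbT.
  by case: G H => [a|e x y] /= H; [case: H => [E|[]]; subst g | case: H].
Qed.

Section Construct.
Variables (D : Type) (M : gstructure D) (d0 : D) (phi : gform).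

Definition Sig := sub phi.
Definition K := size Sig.
Definition S := specs phi.
Definition k := size S.
Definition T := {ffun 'I_K -> bool}.

Definition typ (d : D) : T := [ffun i : 'I_K => pb (gholds M (asgxy d d) (nth dflt Sig i))].
Definition realb (t : T) := pb (exists d, typ d = t).
Definition rep (t : T) : D := epsilon (inhabits d0) (fun d => typ d = t).
Definition Sn (i : nat) := nth 0 S i.
Definition cmb (i : nat) (th t : T) := pb (exists x, sspec M (Sn i) (rep th) x /\ typ x = t).
Definition crep (i : nat) (th t : T) : D :=
  epsilon (inhabits d0) (fun x => sspec M (Sn i) (rep th) x /\ typ x = t).

Definition ct := (T * 'I_3 * 'I_K * k.-tuple T)%type.
Definition allowed (c : ct) : bool :=
  realb c.1.1.1 && all realb c.2 && [forall i : 'I_k, cmb i (tnth c.2 i) c.1.1.1].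
Definition X := {c : ct | allowed c}.

Definition j0 : 'I_K := Ordinal (sub_size_pos phi).
Definition c0 : ct := (typ d0, ord0, j0, [tuple typ d0 | i < k]).
Lemma typ_same d d' : typ d = typ d' -> sametype M Sig d d'.
Proof.
move=> E chi Hin.
have [i [Hi Hn]] := In_nth_seq dflt Hin.
have := congr1 (fun f : T => f (Ordinal (Hi : i < K))) E; rewrite !ffunE /= Hn.
exact: pb_iff.
Qed.

Lemma realb_typ d : realb (typ d).
Proof. by apply/pbP; exists d. Qed.

Lemma rep_typ t : realb t -> typ (rep t) = t.
Proof. move/pbP => H; rewrite /rep; exact: (epsilon_spec (inhabits d0) (fun d => typ d = t) H). Qed.

Lemma crep_spec i th t : cmb i th t ->
  sspec M (Sn i) (rep th) (crep i th t) /\ typ (crep i th t) = t.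
Proof. move/pbP => H; rewrite /crep; exact: (epsilon_spec (inhabits d0) _ H). Qed.

Lemma c0_allowed : allowed c0.
Proof.
rewrite /allowed /= realb_typ /=; apply/andP; split.
  by apply/allP => t /mapP [i _ ->]; apply: realb_typ.
apply/forallP => i; rewrite tnth_mktuple; apply/pbP.
exists (rep (typ d0)); split; first exact: sspec_refl.
by rewrite rep_typ // realb_typ.
Qed.
Definition x0 : X := exist _ c0 c0_allowed.

Definition m := #|{: X}|.
Definition Node := {ffun 'I_k.+1 -> 'I_m}.
Definition ssum (u : Node) := (\sum_(c < k.+1) (u c : nat)) %% m.
Definition cont (u : Node) : X := nth x0 (enum {: X}) (ssum u).
Definition tau u := (val (cont u)).1.1.1.
Definition lay u := (val (cont u)).1.1.2.
Definition req u := (val (cont u)).1.2.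
Definition thn u (n : nat) : T := nth (typ d0) (val (cont u)).2 n.
Definition src u := rep (tau u).

Definition sameclassn (n : nat) (u v : Node) : bool :=
  [forall c : 'I_k.+1, (val c != n) ==> (u c == v c)] && (thn u n == thn v n).
Definition sspecN (e : nat) (u v : Node) : bool :=
  if e \in S then sameclassn (index e S) u v else u == v.

Definition Q (j : nat) := nth dflt Sig j.
Definition dw (u : Node) (j : nat) : D :=
  match guard_of (Q j) with
  | Some (GSpec g _ _) => if g \in S then crep (index g S) (thn u (index g S)) (tau u) else rep (tau u)
  | _ => rep (tau u)
  end.
Definition we (u : Node) (j : nat) : D := epsilon (inhabits d0) (wp M (Q j) (dw u j)).
Definition witok (u v : Node) : bool :=
  pb (wp M (Q (req v)) (dw u (req v)) (we u (req v)) /\ typ (we u (req v)) = tau v /\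
      forall i : 'I_k, sameclassn i u v -> sspec M (Sn i) (dw u (req v)) (we u (req v))).
Definition Def (u v : Node) : option (D * D) :=
  match [pick i : 'I_k | sameclassn i u v] with
  | Some i => Some (crep i (thn u i) (tau u), crep i (thn u i) (tau v))
  | None => None
  end.
Definition W (u v : Node) := if witok u v then Some (dw u (req v), we u (req v)) else Def u v.
Definition nxt (l : 'I_3) : nat := l.+1 %% 3.
Definition swp (p : D * D) := (p.2, p.1).
Definition Lk (u v : Node) : option (D * D) :=
  if u == v then Some (src u, src u)
  else if (lay v : nat) == nxt (lay u) then W u v
  else if (lay u : nat) == nxt (lay v) then omap swp (W v u)
  else Def u v.

Definition srelN (s : nat) (L : seq Node) : Prop :=
  match L with
  | [::] => srel M s [::]
  | z0 :: _ =>
    match [seq z <- L | z != z0] with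
    | [::] => srel M s (nseq (size L) (src z0))
    | z1 :: _ => all (fun z => (z == z0) || (z == z1)) L /\
        match Lk z0 z1 with
        | Some (d, e) => srel M s (map (fun z => if z == z0 then d else e) L)
        | None => False
        end
    end
  end.


Lemma allowed_cont u : allowed (val (cont u)).
Proof. exact: valP. Qed.

Lemma realb_tau u : realb (tau u).
Proof. by have := allowed_cont u; rewrite /allowed => /andP [/andP [H _] _]. Qed.

Lemma typ_src u : typ (src u) = tau u.
Proof. by rewrite /src rep_typ // realb_tau. Qed.

Lemma thn_real u i : i < k -> realb (thn u i).
Proof.
move=> Hi; have := allowed_cont u; rewrite /allowed => /andP [/andP [_ /allP H] _].
by apply: H; rewrite /thn mem_nth // size_tuple.
Qed.

Lemma thn_cmb u i : i < k -> cmb i (thn u i) (tau u).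
Proof.
move=> Hi; have := allowed_cont u; rewrite /allowed => /andP [_ /forallP H].
by have := H (Ordinal Hi); rewrite (tnth_nth (typ d0)).
Qed.

Lemma sameclassn_refl n u : sameclassn n u u.
Proof. by rewrite /sameclassn eqxx andbT; apply/forallP => c; rewrite eqxx implybT. Qed.

Lemma sameclassn_sym n u v : sameclassn n u v = sameclassn n v u.
Proof.
rewrite /sameclassn eq_sym; congr (_ && _).
by apply: eq_forallb => c; rewrite [u c == _]eq_sym.
Qed.

Lemma sameclassn_trans n u v w : sameclassn n u v -> sameclassn n v w -> sameclassn n u w.
Proof.
move=> /andP [/forallP H1 /eqP E1] /andP [/forallP H2 /eqP E2].
rewrite /sameclassn E1 E2 eqxx andbT; apply/forallP => c; apply/implyP => Hc.
have := H1 c; have := H2 c; rewrite Hc /= => /eqP -> /eqP -> //.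
Qed.

Lemma sameclassn_uniq n1 n2 u v : n1 != n2 -> sameclassn n1 u v -> sameclassn n2 u v -> u = v.
Proof.
move=> Hn /andP [/forallP H1 _] /andP [/forallP H2 _]; apply/ffunP => c.
case: (eqVneq (val c) n1) => Hc.
- have := H2 c; rewrite -Hc in Hn; rewrite Hn /=; by move/eqP.
- by have := H1 c; rewrite Hc /= => /eqP.
Qed.

Lemma sspecN_refl e u : sspecN e u u.
Proof. by rewrite /sspecN; case: ifP => _; [apply: sameclassn_refl|]. Qed.
Lemma sspecN_sym e u v : sspecN e u v -> sspecN e v u.
Proof. by rewrite /sspecN; case: ifP => _; [rewrite sameclassn_sym|rewrite eq_sym]. Qed.
Lemma sspecN_trans e u v w : sspecN e u v -> sspecN e v w -> sspecN e u w.
Proof.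
rewrite /sspecN; case: ifP => _; first exact: sameclassn_trans.
by move=> /eqP -> /eqP ->.
Qed.

Definition NS : gstructure Node :=
  @Structure Node srelN (fun e u v => sspecN e u v)
    sspecN_refl sspecN_sym sspecN_trans.

Lemma nxt_excl (a b : 'I_3) : (b : nat) == nxt a -> ((a : nat) == nxt b) = false.
Proof.
case: a b => [[|[|[|a]]] Ha] [[|[|[|b]]] Hb] //=.
Qed.

Lemma Def_sym u v : Def v u = omap swp (Def u v).
Proof.
rewrite /Def.
have -> : [pick i : 'I_k | sameclassn i v u] = [pick i : 'I_k | sameclassn i u v].
  by apply: eq_pick => i; rewrite sameclassn_sym.
case: pickP => // i /andP [_ /eqP E] /=.
by rewrite E.
Qed.

Lemma Lk_sym u v : Lk v u = omap swp (Lk u v).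
Proof.
rewrite /Lk eq_sym; case: eqP => [->|Huv] //.
case: ifP => H1.
- by rewrite (nxt_excl H1); case: (W v u) => [[]|].
- case: ifP => H2.
  + by case: (W u v) => [[]|].
  + rewrite Def_sym; by case: (Def u v) => [[]|].
Qed.

Lemma dw_typ u j : typ (dw u j) = tau u.
Proof.
rewrite /dw; case: (guard_of (Q j)) => [[a|g x y]|]; try by rewrite rep_typ // realb_tau.
case: ifP => Hg; last by rewrite rep_typ // realb_tau.
by have [_ ->] := crep_spec (thn_cmb u (proj2 (rwP idP) (etrans (index_mem g S) Hg))).
Qed.

Lemma Def_some p q (i : 'I_k) : p != q -> sameclassn i p q ->
  exists d e, Def p q = Some (d, e) /\ sspec M (Sn i) d e /\ typ d = tau p /\ typ e = tau q.
Proof.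
move=> Hpq Hi; rewrite /Def; case: pickP => [i' Hi'|/(_ i)]; last by rewrite Hi.
have Ei : i' = i.
  apply/val_inj/eqP; apply/negPn/negP => Hne.
  by move/eqP: Hpq; apply; apply: (sameclassn_uniq Hne Hi' Hi).
subst i'.
move: (Hi) => /andP [_ /eqP Eth].
have [Sp Tp] := crep_spec (thn_cmb p (ltn_ord i)).
have := crep_spec (thn_cmb q (ltn_ord i)); rewrite -Eth => -[Sq Tq].
exists (crep i (thn p i) (tau p)), (crep i (thn p i) (tau q)); split => //; split => //.
apply: sspec_trans (sspec_sym Sp) Sq.
Qed.

Lemma W_some p q (i : 'I_k) : p != q -> sameclassn i p q ->
  exists d e, W p q = Some (d, e) /\ sspec M (Sn i) d e.
Proof.
move=> Hpq Hi; rewrite /W; case: ifP => Hw.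
- move/pbP: Hw => [_ [_ H]]; do 2 eexists; split; first reflexivity. exact: H.
- by have [d [e [E [H _]]]] := Def_some Hpq Hi; exists d, e.
Qed.

Lemma W_typ u v d e : W u v = Some (d, e) -> typ d = tau u /\ typ e = tau v.
Proof.
rewrite /W; case: ifP => Hw.
- by move=> [<- <-]; move/pbP: Hw => [_ [H _]]; rewrite dw_typ.
- rewrite /Def; case: pickP => // i /andP [_ /eqP Eth] [<- <-].
  have [_ Tp] := crep_spec (thn_cmb u (ltn_ord i)).
  by have := crep_spec (thn_cmb v (ltn_ord i)); rewrite -Eth => -[_ Tq].
Qed.

Lemma Def_typ u v d e : Def u v = Some (d, e) -> typ d = tau u /\ typ e = tau v.
Proof.
rewrite /Def; case: pickP => // i /andP [_ /eqP Eth] [<- <-].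
have [_ Tp] := crep_spec (thn_cmb u (ltn_ord i)).
by have := crep_spec (thn_cmb v (ltn_ord i)); rewrite -Eth => -[_ Tq].
Qed.

Lemma Lk_typ u v d e : Lk u v = Some (d, e) -> typ d = tau u /\ typ e = tau v.
Proof.
rewrite /Lk; case: eqP => [<-|_]; first by move=> [<- <-]; rewrite typ_src.
case: ifP => _; first exact: W_typ.
case: ifP => _; last exact: Def_typ.
case E: (W v u) => [[d' e']|] //= [<- <-].
by have [] := W_typ E.
Qed.

Lemma Lk_spec p q g : sspecN g p q -> exists d e, Lk p q = Some (d, e) /\ sspec M g d e.
Proof.
case: (eqVneq p q) => [<-|Hpq] H.
  by exists (src p), (src p); rewrite /Lk eqxx; split => //; apply: sspec_refl.
move: H; rewrite /sspecN; case: ifP => Hg; last by rewrite (negbTE Hpq).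
move=> Hs.
have Hi : index g S < k by rewrite /k index_mem.
have Eg : Sn (Ordinal Hi) = g by rewrite /Sn /= nth_index.
rewrite -Eg.
rewrite /Lk (negbTE Hpq).
case: ifP => _; first exact: (@W_some p q (Ordinal Hi) Hpq Hs).
case: ifP => _.
- have Hqp : q != p by rewrite eq_sym.
  rewrite sameclassn_sym in Hs.
  have [d [e [E Hde]]] := @W_some q p (Ordinal Hi) Hqp Hs.
  by rewrite E; exists e, d; split => //; apply: sspec_sym.
- by have [d [e [E [Hde _]]]] := @Def_some p q (Ordinal Hi) Hpq Hs; exists d, e.
Qed.

Lemma map_asg_diag (Y : Type) (x : Y) (args : seq var) :
  map (asgxy x x) args = nseq (size args) x.
Proof. by elim: args => //= a l ->; case: a. Qed.

Lemma map_asg_const (p q : Node) (d e : D) a0 args : p != q ->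
  (forall z, z \in map (asgxy p q) args -> z = asgxy p q a0) ->
  map (asgxy d e) args = nseq (size args) (asgxy d e a0).
Proof.
move=> Hpq; elim: args => //= a l IH H.
rewrite IH; last by move=> z Hz; apply: H; rewrite inE Hz orbT.
have := H (asgxy p q a); rewrite inE eqxx => /(_ isT).
by destruct a, a0; simpl => E; rewrite ?E ?eqxx in Hpq.
Qed.

Lemma map_asg_pair (p q : Node) (d e : D) args : p != q ->
  map (fun z => if z == p then d else e) (map (asgxy p q) args) = map (asgxy d e) args.
Proof.
move=> Hpq; elim: args => //= a l ->; case: a => //=; first by rewrite eqxx.
by rewrite eq_sym (negbTE Hpq).
Qed.

Lemma mem_map_asg (p q : Node) z args : z \in map (asgxy p q) args -> z = p \/ z = q.
Proof.
elim: args => //= a l IH; rewrite inE => /orP [/eqP ->|/IH //]; case: a; auto.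
Qed.

Lemma In_map_asg (p q : Node) a args : In a args -> asgxy p q a \in map (asgxy p q) args.
Proof. elim: args => //= b l IH [->|H]; rewrite inE ?eqxx //; by rewrite IH ?orbT. Qed.

Lemma filter_nil_all (L : seq Node) z0 : [seq z <- L | z != z0] = [::] ->
  forall z, z \in L -> z = z0.
Proof.
move=> E z Hz; apply/eqP/negPn/negP => Hne.
have : z \in [seq z <- L | z != z0] by rewrite mem_filter Hne Hz.
by rewrite E.
Qed.

Lemma srelN_cons s z0 L' : srelN s (z0 :: L') =
  match [seq z <- z0 :: L' | z != z0] with
  | [::] => srel M s (nseq (size (z0 :: L')) (src z0))
  | z1 :: _ => all (fun z => (z == z0) || (z == z1)) (z0 :: L') /\
      match Lk z0 z1 with
      | Some (d, e) => srel M s (map (fun z => if z == z0 then d else e) (z0 :: L'))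
      | None => False
      end
  end.
Proof. by []. Qed.

Lemma HA_N s args : In (FAtom (ARel s args)) Sig ->
  forall p q d e, Lk p q = Some (d, e) ->
  (srelN s (map (asgxy p q) args) <-> srel M s (map (asgxy d e) args)).
Proof.
move=> Hin p q d e E.
case: (eqVneq p q) => [Epq|Hpq].
  subst q; move: E; rewrite /Lk eqxx => -[<- <-].
  rewrite !map_asg_diag.
  case: args Hin => [|a0 l] Hin /=; first tauto.
  have -> : [seq z <- nseq (size l) p | z != p] = [::].
    by elim: (size l) => //= n ->; rewrite eqxx.
  by rewrite eqxx /= size_nseq; tauto.
case: args Hin => [|a0 l] Hin; first by rewrite /=; tauto.
change (srelN s (asgxy p q a0 :: map (asgxy p q) l) <-> srel M s (map (asgxy d e) (a0 :: l))).
rewrite srelN_cons.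
set L := asgxy p q a0 :: map (asgxy p q) l.
case Ef: [seq z <- L | z != asgxy p q a0] => [|z1 l1].
- have Hc := filter_nil_all Ef.
  rewrite (@map_asg_const p q d e a0 (a0 :: l) Hpq Hc).
  have [Td Te] := Lk_typ E.
  have Hst : typ (asgxy d e a0) = typ (src (asgxy p q a0)).
    by rewrite typ_src; destruct a0; simpl; rewrite ?Td ?Te.
  have := typ_same Hst Hin => /=.
  rewrite !map_asg_diag /= => H.
  have Ex : forall x : D, asgxy x x a0 = x by destruct a0.
  rewrite !Ex in H; rewrite size_map; tauto.
- have Hz1 : z1 \in [seq z <- L | z != asgxy p q a0] by rewrite Ef inE eqxx.
  rewrite mem_filter in Hz1; move/andP: Hz1 => [Hne Hz1].
  have Hz1' : z1 \in map (asgxy p q) (a0 :: l) by [].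
  have Hall : all (fun z => (z == asgxy p q a0) || (z == z1)) L.
    apply/allP => z Hz.
    have Hz' : z \in map (asgxy p q) (a0 :: l) by [].
    case: (mem_map_asg Hz') => ->; case: (mem_map_asg Hz1') => Ez1; subst z1;
    destruct a0; simpl in Hne |- *; rewrite ?eqxx ?orbT //=; by rewrite eqxx in Hne.
  rewrite Hall.
  destruct a0; simpl in Hne |- *.
  + have Ez1 : z1 = q.
      by case: (mem_map_asg Hz1') => // E1; rewrite E1 eqxx in Hne.
    subst z1; rewrite E eqxx (map_asg_pair d e l Hpq).
    by split; [case|move=> H; split].
  + have Ez1 : z1 = p.
      by case: (mem_map_asg Hz1') => // E1; rewrite E1 eqxx in Hne.
    subst z1; rewrite Lk_sym E /= eqxx.
    have -> : map (fun z => if z == q then e else d) (map (asgxy p q) l) = map (asgxy d e) l.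
      by elim: (l) {Ef Hall Hz1 Hz1' Hin L} => //= a l' ->; case: a => //=; rewrite ?eqxx // (negbTE Hpq).
    by split; [case|move=> H; split].
Qed.

Lemma HAn_N s args p q : In VX args -> In VY args ->
  srelN s (map (asgxy p q) args) -> exists de, Lk p q = Some de.
Proof.
move=> HX HY.
case: (eqVneq p q) => [<-|Hpq]; first by rewrite /Lk eqxx; eauto.
have Hp := In_map_asg p q HX; have Hq := In_map_asg p q HY.
case: args HX HY Hp Hq => [|a0 l] HX HY Hp Hq; first by case: HX.
change (srelN s (asgxy p q a0 :: map (asgxy p q) l) -> exists de, Lk p q = Some de).
rewrite srelN_cons.
set L := asgxy p q a0 :: map (asgxy p q) l.
case Ef: [seq z <- L | z != asgxy p q a0] => [|z1 l1].
- have Hc := filter_nil_all Ef.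
  have E1 := Hc _ Hp; have E2 := Hc _ Hq; simpl in E1, E2.
  have Epq : p = q := etrans E1 (esym E2).
  by rewrite Epq eqxx in Hpq.
- move=> [_ HL].
  have Hz1 : z1 \in [seq z <- L | z != asgxy p q a0] by rewrite Ef inE eqxx.
  rewrite mem_filter in Hz1; move/andP: Hz1 => [Hne Hz1].
  have Hz1' : z1 \in map (asgxy p q) (a0 :: l) by [].
  case E: (Lk (asgxy p q a0) z1) HL => [de|] // _.
  destruct a0; simpl in Hne, E.
  + have Ez1 : z1 = q by case: (mem_map_asg Hz1') => // E1; rewrite E1 eqxx in Hne.
    by subst z1; eauto.
  + have Ez1 : z1 = p by case: (mem_map_asg Hz1') => // E1; rewrite E1 eqxx in Hne.
    by subst z1; rewrite Lk_sym E /=; eauto.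
Qed.

Lemma mpos : 0 < m.
Proof. by apply/card_gt0P; exists x0. Qed.

Lemma line (u : Node) (c : 'I_k.+1) (x : X) :
  exists v : Node, (forall c', c' != c -> v c' = u c') /\ cont v = x.
Proof.
set t := index x (enum {: X}).
have Ht : t < m by rewrite /t /m cardE index_mem mem_enum.
set r := \sum_(c' < k.+1 | c' != c) (u c' : nat).
have Hnv : (t + m - r %% m) %% m < m := ltn_pmod _ mpos.
exists [ffun c' => if c' == c then Ordinal Hnv else u c']; split.
  by move=> c' Hc'; rewrite ffunE (negbTE Hc').
rewrite /cont /ssum (bigD1 c) //= ffunE eqxx /=.
have -> : \sum_(i < k.+1 | i != c) ([ffun c' => if c' == c then Ordinal Hnv else u c'] i : nat) = r.
  by apply: eq_bigr => i Hi; rewrite ffunE (negbTE Hi).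
by rewrite modfix ?mpos // /t nth_index // mem_enum.
Qed.

Lemma const_allowed d (l : 'I_3) (j : 'I_K) : allowed (typ d, l, j, [tuple typ d | i < k]).
Proof.
rewrite /allowed /= realb_typ /=; apply/andP; split.
  by apply/allP => t /mapP [i _ ->]; apply: realb_typ.
apply/forallP => i; rewrite tnth_mktuple; apply/pbP.
exists (rep (typ d)); split; first exact: sspec_refl.
by rewrite rep_typ // realb_typ.
Qed.

Definition u0 : Node := [ffun _ => Ordinal mpos].

Lemma H5_N e' : exists v, sametype M Sig (src v) e'.
Proof.
have [v [_ Hv]] := line u0 ord0 (@exist ct (fun c => is_true (allowed c)) _ (const_allowed e' ord0 j0)).
exists v; apply: typ_same; rewrite typ_src /tau Hv //.
Qed.

Lemma wp_ex (w : var) G psi (pol : bool) d :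
  (exists e, wp M (if pol then FEx w G psi else FAll w G psi) d e) <->
  (if pol then gholds M (asgxy d d) (FEx w G psi) else ~ gholds M (asgxy d d) (FAll w G psi)).
Proof.
case: pol => /=.
- split => -[e]; rewrite ?upd_diag => H; exists e; rewrite ?upd_diag //.
- split.
  + move=> [e [HG Hp]] H; apply: Hp; have := H e; rewrite !upd_diag; by apply.
  + move=> H; apply: NNPP => Hn; apply: H => e; rewrite !upd_diag => HG.
    apply: NNPP => Hp; apply: Hn; exists e; split => //.
Qed.

Lemma wp_ex' (w : var) G psi (pol : bool) d :
  (exists e, wp M (if pol then FEx w G psi else FAll w G psi) d e) <->
  (exists e, eval_guard M (asg2 w d e) G /\
     (if pol then gholds M (asg2 w d e) psi else ~ gholds M (asg2 w d e) psi)).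
Proof. by case: pol. Qed.

Lemma nxt_neq (a : 'I_3) : (a : nat) != nxt a.
Proof. by case: a => [[|[|[|a]]] Ha]. Qed.

Lemma Lk_o' w u v d e : Lk u v = Some (d, e) ->
  Lk (ox w u v) (oy w u v) = Some (ox w d e, oy w d e).
Proof. by case: w => //= H; rewrite Lk_sym H. Qed.

Lemma HW_N (Hg : guarded phi) (He : eqfree phi) u w G psi (pol : bool) :
  In (if pol then FEx w G psi else FAll w G psi) Sig -> guard_has (other w) G ->
  (exists e', eval_guard M (asg2 w (src u) e') G /\
     (if pol then gholds M (asg2 w (src u) e') psi else ~ gholds M (asg2 w (src u) e') psi)) ->
  exists v d e, Lk u v = Some (d, e) /\ eval_guard M (asg2 w d e) G /\
     (if pol then gholds M (asg2 w d e) psi else ~ gholds M (asg2 w d e) psi) /\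
     eval_guard NS (asg2 w u v) G.
Proof.
move=> Hin Ho Hex.
set Qf := (if pol then FEx w G psi else FAll w G psi) in Hin.
have [j [Hj HQ]] := In_nth_seq dflt Hin.
pose jo : 'I_K := Ordinal Hj.
have HgQ := sub_guarded Hg Hin; have HeQ := sub_eqfree He Hin.
have HGw : guard_has w G by move: HgQ; rewrite /Qf; case: (pol) => /= [[_ []]|[_ []]].
have HGe : guard_eqfree G by move: HeQ; rewrite /Qf; case: (pol) => /= /andP [].
have Hd : typ (dw u j) = typ (src u) by rewrite dw_typ typ_src.
have Hst := typ_same Hd.
have Hexd : exists e, wp M Qf (dw u j) e.
  have H1 := proj1 (wp_ex w G psi pol (src u)) (proj2 (wp_ex' w G psi pol (src u)) Hex).
  have H2 := Hst _ Hin.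
  apply/wp_ex; move: H1 H2; rewrite /Qf; case: (pol); tauto.
pose e := we u j.
have He' : wp M Qf (dw u j) e.
  rewrite /e /we /Q HQ; exact: (epsilon_spec (inhabits d0) _ Hexd).
have HW' : eval_guard M (asg2 w (dw u j) e) G /\
   (if pol then gholds M (asg2 w (dw u j) e) psi else ~ gholds M (asg2 w (dw u j) e) psi).
  by move: He'; rewrite /Qf; case: (pol).
pose l' : 'I_3 := Ordinal (ltn_pmod (lay u).+1 (isT : 0 < 3)).
have Hsubp : incl (sub Qf) Sig := sub_incl Hin.
destruct G as [[s args|x y]|g a b]; first last.
-
  have Hab : (a = VX /\ b = VY) \/ (a = VY /\ b = VX).
    by clear -HGw Ho; destruct w, a, b; simpl in *; intuition congruence.
  have Hgin : g \in S.
    apply: (sub_specs Hin); rewrite /Qf; case: (pol); by rewrite /= inE eqxx.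
  have Hi : index g S < k by rewrite /k index_mem.
  pose io : 'I_k := Ordinal Hi.
  have ESn : Sn (index g S) = g by rewrite /Sn nth_index.
  have Hdw : dw u j = crep (index g S) (thn u (index g S)) (tau u).
    by rewrite /dw /Q HQ /Qf; case: (pol); rewrite /= Hgin.
  have Hde : sspec M g (dw u j) e.
    have := proj1 HW'; rewrite /=.
    by case: Hab => [[-> ->]|[-> ->]]; case: (w) => /= H; auto using sspec_sym.
  have [Hcr_s Hcr_t] := crep_spec (thn_cmb u Hi).
  rewrite ESn -Hdw in Hcr_s.
  pose th' := [tuple (if i0 == io then thn u (index g S) else typ e) | i0 < k].
  have Hal : allowed (typ e, l', jo, th').
    rewrite /allowed /= realb_typ /=; apply/andP; split.
      apply/allP => t /mapP [i0 _ ->]; case: ifP => _; [exact: thn_real | exact: realb_typ].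
    apply/forallP => i0; rewrite tnth_mktuple; apply/pbP; case: ifP => /eqP Ei0.
    + exists e; split => //; rewrite Ei0 /= ESn.
      exact: sspec_trans Hcr_s Hde.
    + exists (rep (typ e)); split; first exact: sspec_refl.
      by rewrite rep_typ // realb_typ.
  have [v [Hv Hc]] := line u (widen_ord (leqnSn k) io) (@exist ct (fun c => is_true (allowed c)) _ Hal).
  have Hlay : (lay v : nat) = nxt (lay u) by rewrite /lay Hc.
  have Hreq : req v = jo by rewrite /req Hc.
  have Htau : tau v = typ e by rewrite /tau Hc.
  have Huv : u != v.
    apply/eqP => E; move: Hlay; rewrite -E => Hl; by move: (nxt_neq (lay u)); rewrite -Hl eqxx.
  have Hth : thn v (index g S) = thn u (index g S).
    rewrite /thn Hc /= -/(thn u _).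
    by rewrite -(tnth_nth (typ d0) th' io) tnth_mktuple eqxx.
  have Hsc : sameclassn (index g S) u v.
    rewrite /sameclassn Hth eqxx andbT; apply/forallP => c; apply/implyP => Hcn.
    rewrite Hv // ; apply/eqP => Ec; move: Hcn; by rewrite Ec /= eqxx.
  have Hwit : witok u v.
    apply/pbP; rewrite Hreq /=; split; first by rewrite /Q HQ.
    split; first by rewrite Htau.
    move=> i' Hi'.
    case: (eqVneq (i' : nat) (index g S)) => [Ei'|Hne].
      by rewrite Ei' ESn.
    by move/eqP: Huv; case; apply: (sameclassn_uniq Hne Hi' Hsc).
  have HL : Lk u v = Some (dw u j, e).
    by rewrite /Lk (negbTE Huv) Hlay eqxx /W Hwit Hreq.
  exists v, (dw u j), e; split => //; split; first tauto.
  split; first tauto.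
  rewrite /= /sspecN Hgin.
  by case: Hab => [[-> ->]|[-> ->]]; case: (w) => /=; rewrite // sameclassn_sym.
- by [].
-
  have [v [Hv Hc]] := line u ord_max (@exist ct (fun c => is_true (allowed c)) _ (const_allowed e l' jo)).
  have Hlay : (lay v : nat) = nxt (lay u) by rewrite /lay Hc.
  have Hreq : req v = jo by rewrite /req Hc.
  have Htau : tau v = typ e by rewrite /tau Hc.
  have Huv : u != v.
    apply/eqP => E; move: Hlay; rewrite -E => Hl; by move: (nxt_neq (lay u)); rewrite -Hl eqxx.
  have Hnsc : forall i : 'I_k, ~~ sameclassn i u v.
    move=> i; apply/negP => /andP [/forallP H _]; move/eqP: Huv; apply.
    apply/ffunP => c; case: (eqVneq c ord_max) => [->|Hcn]; last by rewrite Hv.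
    have := H ord_max; rewrite /= (_ : (k != i) = true) ?implyTb; first by move/eqP.
    by apply/eqP => Ek; have := ltn_ord i; rewrite -Ek ltnn.
  have Hdw : dw u j = rep (tau u) by rewrite /dw /Q HQ /Qf; case: (pol).
  have Hwit : witok u v.
    apply/pbP; rewrite Hreq /=; split; first by rewrite /Q HQ.
    split; first by rewrite Htau.
    by move=> i' Hi'; have := Hnsc i'; rewrite Hi'.
  have HL : Lk u v = Some (dw u j, e).
    by rewrite /Lk (negbTE Huv) Hlay eqxx /W Hwit Hreq.
  exists v, (dw u j), e; split => //; split; first tauto.
  split; first tauto.
  have Hat : In (FAtom (ARel s args)) Sig.
    apply: Hsubp; rewrite /Qf; case: (pol); simpl; auto.
  rewrite /= asg2E; apply/(HA_N Hat (Lk_o' w HL)).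
  by have := proj1 HW'; rewrite /= asg2E.
Qed.

Lemma model_exists (Hg : guarded phi) (He : eqfree phi) (Hs : forall v, ~ fv phi v)
  (a : var -> D) : gholds M a phi -> exists b : var -> Node, gholds NS b phi.
Proof.
move=> Ha; exists (asgxy u0 u0).
have H0 : forall u, Lk u u = Some (src u, src u) by move=> u; rewrite /Lk eqxx.
have H1 : forall u v d e, Lk u v = Some (d, e) ->
    sametype M Sig d (src u) /\ sametype M Sig e (src v).
  move=> u v d e /Lk_typ [Td Te]; split; apply: typ_same; by rewrite typ_src.
have := @main_link D Node M NS Sig src Lk H0 H1 Lk_sym HA_N HAn_N
  (fun g p q H => Lk_spec H) (HW_N Hg He) H5_N phi Hg He (incl_refl _) u0 u0 _ _ (H0 u0).
move=> ->.
have Hc := @gholds_coinc D M phi a (asgxy (src u0) (src u0)).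
by apply: (proj1 (Hc _)) Ha => v /Hs.
Qed.

Lemma card_Node_eq : #|{: Node}| = m ^ k.+1.
Proof. by rewrite card_ffun !card_ord. Qed.

Lemma card_m : m <= 2 ^ K * 3 * K * (2 ^ K) ^ k.
Proof.
rewrite /m card_sig.
apply: leq_trans (max_card _) _.
by rewrite !card_prod card_tuple !card_ord /T card_ffun card_bool card_ord.
Qed.

End Construct.

Import GRing.Theory.

Lemma atom_len_pos a : 1 <= atom_len a.
Proof. by case: a. Qed.

Lemma gsub_le g : size (gsub g) <= guard_len g.
Proof. by case: g => [[]|]. Qed.

Lemma gspecs_le g : size (gspecs g) <= guard_len g.
Proof. by case: g => [[]|]. Qed.

Lemma size_sub_le f : size (sub f) <= flen f.
Proof.
elim: f => [a|f IH|f1 IH1 f2 IH2|f1 IH1 f2 IH2|w G f IH|w G f IH] /=;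
  rewrite ?size_cat.
- exact: atom_len_pos.
- lia.
- lia.
- lia.
- have := gsub_le G; lia.
- have := gsub_le G; lia.
Qed.

Lemma size_specs_le f : size (specs f) <= flen f.
Proof.
elim: f => [a|f IH|f1 IH1 f2 IH2|f1 IH1 f2 IH2|w G f IH|w G f IH] /=;
  rewrite ?size_cat.
- done.
- lia.
- lia.
- lia.
- have := gspecs_le G; lia.
- have := gspecs_le G; lia.
Qed.

Lemma arith K k L : K <= L -> k <= L -> (2^K * 3 * K * (2^K)^k)^k.+1 <= 2^((L+2)^3).
Proof.
move=> HK Hk.
have h1 : 3 * K <= 2 ^ (K + 2).
  have := ltn_expl K (isT : 1 < 2); rewrite expnD => h; lia.
have h2 : 2^K * 3 * K * (2^K)^k <= 2 ^ (L + (L + 2) + L * L).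
  apply: (@leq_trans (2 ^ (K + (K + 2) + K * k))); last first.
    rewrite leq_exp2l //; apply: leq_add; [lia|]; exact: leq_mul.
  rewrite !expnD expnM.
  have -> : 2 ^ K * 3 * K * (2 ^ K) ^ k = 2 ^ K * (3 * K) * (2 ^ K) ^ k by rewrite !mulnA.
  by apply: leq_mul; [apply: leq_mul; [by []| by rewrite -expnD] | by []].
apply: (@leq_trans ((2 ^ (L + (L + 2) + L * L)) ^ k.+1)).
  by rewrite leq_exp2r.
apply: (@leq_trans ((2 ^ (L + (L + 2) + L * L)) ^ L.+1)).
  by apply: leq_pexp2l; rewrite ?expn_gt0.
rewrite -expnM leq_exp2l //.
have -> : (L + 2) ^ 3 = (L+2)*(L+2)*(L+2) by rewrite !expnS expn0; lia.
nia.
Qed.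

Lemma peval (x : nat) : ((('X + 2%:P) ^+ 3 : {poly nat}).[x])%R = (x + 2) ^ 3.
Proof.
rewrite horner_exp hornerD hornerX hornerC.
by rewrite -natrXE.
Qed.

Theorem theorem1 :
  exists p : {poly nat},
    forall phi : gform,
      gsentence phi -> eqfree phi -> satisfiable phi ->
      exists n : nat, n <= 2 ^ (p.[flen phi])%R /\ has_model_of_size phi n.
Proof.
exists (('X + 2%:P) ^+ 3)%R => phi [Hg Hs] He [D [M [a Ha]]].
have [b Hb] := model_exists (a VX) Hg He Hs Ha.
exists #|{: Node M (a VX) phi}|; split; last exact: transport Hb.
rewrite peval card_Node_eq.
apply: leq_trans (_ : (2 ^ K phi * 3 * K phi * (2 ^ K phi) ^ k phi) ^ (k phi).+1 <= _).
  by rewrite leq_exp2r // card_m.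
apply: arith; [exact: size_sub_le | exact: size_specs_le].
Qed.
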